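(* Let $r \ge 2$ be an integer. There is a constant $c = c(r) > 0$, depending only on $r$, such that for all integers $n \ge r$, \[\overrightarrow{\Gamma}_{r-1}(H(n,r)) \ge c\,(\ln n)^{\frac{1}{r-1}}.\]
   Context: $H(n,r)$ denotes the complete $r$-uniform hypergraph on $n$ vertices (every $r$-subset of the $n$-element vertex set is an edge). An orientation $D$ of an $r$-uniform hypergraph $H=(V,\mathcal{E})$ assigns to each edge $E\in\mathcal{E}$ exactly one of the $r!$ linear orderings of its elements. For $1\le p\le r-1$, a set $S\subseteq V$ is a directed $p$-dominating set of $D$ if for every vertex $u\in V\setminus S$ there is an edge $E\in\mathcal{E}$ with $u\in E$ whose first $p$ vertices (in the ordering given by $D$) all lie in $S$. $\overrightarrow{\gamma}_p(D)$ is the minimum cardinality of a directed $p$-dominating set of $D$, and $\overrightarrow{\Gamma}_p(H)$ is the maximum of $\overrightarrow{\gamma}_p(D)$ over all orientations $D$ of $H$. $\ln$ is the natural logarithm. *)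

(* Defs.v *)
From mathcomp Require Import all_boot.
Set Implicit Arguments. Unset Strict Implicit. Unset Printing Implicit Defensive.

(* Vertex set of H(n,r) is 'I_n; edges are the sets E : {set 'I_n} with #|E| = r.
   An orientation is represented by a finite function assigning to every set E
   an r-tuple; it is an orientation of H(n,r) when, for every edge E, the tuple
   is a linear ordering of E (a duplicate-free enumeration of E).  Values on
   non-edges are irrelevant. *)
Definition orientation_of (n r : nat) := {ffun {set 'I_n} -> r.-tuple 'I_n}.

Definition is_orientation (n r : nat) (D : orientation_of n r) : bool :=
  [forall E : {set 'I_n}, (#|E| == r) ==> perm_eq (D E) (enum E)].

Definition dominating (n r p : nat) (D : orientation_of n r) (S : {set 'I_n}) : bool :=
  [forall u : 'I_n, (u \notin S) ==>
     [exists E : {set 'I_n}, [&& #|E| == r, u \in E & all (fun v => v \in S) (take p (D E))]]].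

(* gamma_p(D): minimum size of a directed p-dominating set (the whole vertex set,
   of size n, is always dominating, so the default value n is harmless). *)
Definition gamma (n r p : nat) (D : orientation_of n r) : nat :=
  \big[minn/#|'I_n|]_(S : {set 'I_n} | dominating p D S) #|S|.

Definition Gamma (n r p : nat) : nat :=
  \max_(D : orientation_of n r | is_orientation D) gamma p D.

(* Main.v *)
Require Import Defs.
From Stdlib Require Import Reals Lra.

Module Helpers.
From mathcomp Require Import all_boot zify.
Set Implicit Arguments. Unset Strict Implicit. Unset Printing Implicit Defensive.

Lemma card_ffun_forall (I J : finType) (P : I -> pred J) :
  #|[set h : {ffun I -> J} | [forall i, P i (h i)]]| = \prod_i #|P i|.
Proof.
rewrite cardsE.
have -> : #|[pred h : {ffun I -> J} | [forall i, P i (h i)]]| = #|(family P : simpl_pred {ffun I -> J})|.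
  by apply: eq_card => h.
rewrite card_family.
by rewrite /image_mem -[RHS]big_enum /= [in RHS]unlock /reducebig foldr_map.
Qed.

Lemma extend_set (T : finType) k (S : {set T}) : #|S| <= k -> k <= #|T| ->
  exists S' : {set T}, (S \subset S') && (#|S'| == k).
Proof.
move=> h1 h2; move: {2}(k - #|S|) (erefl (k - #|S|)) => d.
elim: d S h1 => [|d IH] S h1 hd.
  by exists S; rewrite subxx /= eqn_leq h1 /=; move/eqP: hd; rewrite subn_eq0.
have : 0 < #|~: S| by rewrite -(cardsC S) in h2; lia.
rewrite card_gt0 => /set0Pn [x]; rewrite inE => xS.
have cx : #|x |: S| = #|S|.+1 by rewrite cardsU1 xS.
have [S' /andP [s1 s2]] := IH (x |: S) ltac:(lia) ltac:(lia).
exists S'; rewrite s2 andbT; apply: subset_trans s1; exact: subsetUr.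
Qed.

Section Count.
Variable n : nat.
Local Notation Om := {ffun 'I_n -> {ffun 'I_n -> bool}}.

Definition xr (g : Om) (u v : 'I_n) := g u v (+) g v u.
Definition beats (g : Om) (u v : 'I_n) :=
  (u != v) && (if (u < v)%N then xr g u v else ~~ xr g u v).
Definition tdom (g : Om) (S : {set 'I_n}) :=
  [forall u, (u \notin S) ==> [exists s in S, beats g s u]].
Definition phi (S : {set 'I_n}) (g : Om) : Om :=
  [ffun u => [ffun s => if (u \notin S) && (s \in S)
     then g u s (+) g s u (+) ~~ (s < u)%N else g u s]].

Lemma phiK S : involutive (phi S).
Proof.
move=> g; apply/ffunP => u; apply/ffunP => s; rewrite !ffunE.
case: (boolP (u \in S)) => uS; case: (boolP (s \in S)) => sS //=.
by case: (g u s); case: (g s u); case: (s < u)%N.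
Qed.

Lemma tdom_phi S g : tdom g S = [forall u, (u \in S) || [exists s in S, phi S g u s]].
Proof.
apply/forallP/forallP => H u; have := H u; case: (boolP (u \in S)) => //= uS.
- move=> /existsP [s /andP [sS hb]]; apply/existsP; exists s; rewrite sS /=.
  rewrite !ffunE uS sS /=; move: hb; rewrite /beats /xr.
  by case: (s < u)%N; case: (g s u); case: (g u s); rewrite ?andbF.
- move=> /existsP [s /andP [sS hb]]; apply/existsP; exists s; rewrite sS /=.
  move: hb; rewrite !ffunE uS sS /= /beats /xr.
  have -> : (s != u) by apply: contraNneq uS => <-.
  by case: (s < u)%N; case: (g s u); case: (g u s).
Qed.

Lemma card_rows (S : {set 'I_n}) :
  #|[set row : {ffun 'I_n -> bool} | [forall s, (s \in S) ==> ~~ row s]]| = 2 ^ (n - #|S|).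
Proof.
rewrite (card_ffun_forall (fun s b => (s \in S) ==> ~~ b)).
rewrite (bigID (fun s => s \in S)) /=.
rewrite [X in X * _](eq_bigr (fun _ => 1)); last first.
  by move=> s sS; apply: (@eq_card1 _ false) => b; rewrite !inE sS; case: b.
rewrite [X in _ * X](eq_bigr (fun _ => 2)); last first.
  move=> s sS; rewrite -[RHS]card_bool; apply: eq_card => b.
  by rewrite !unfold_in /=; move: sS; rewrite unfold_in => /negbTE ->.
rewrite big1 // mul1n.
rewrite (eq_bigl (fun s => s \in ~: S)); last by move=> s; rewrite inE.
rewrite prod_nat_const; congr (_ ^ _).
have h := cardsC S; rewrite card_ord in h.
have hS : #|S| <= n by move: (leq_addr #|~: S| #|S|); rewrite h.
by apply/eqP; rewrite -(eqn_add2l #|S|) subnKC // h.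
Qed.


Lemma card_allrows : #|{ffun 'I_n -> bool}| = 2 ^ n.
Proof. by rewrite card_ffun card_bool card_ord. Qed.

Lemma card_exrows (S : {set 'I_n}) :
  #|(fun row : {ffun 'I_n -> bool} => [exists s in S, row s])| = 2 ^ n - 2 ^ (n - #|S|).
Proof.
rewrite -card_allrows -(card_rows S).
rewrite -(cardC (fun row : {ffun 'I_n -> bool} => [exists s in S, row s])).
set A := [set _ | _]; set B := [predC _].
have -> : #|B| = #|A|; last by rewrite addnK.
apply: eq_card => row; rewrite /A /B !inE /=.
rewrite negb_exists; apply/forallP/forallP => H s; have := H s.
  by rewrite negb_and; case: (s \in S).
by case: (s \in S) => //= /negbTE ->.
Qed.

Lemma card_tdom (S : {set 'I_n}) :
  #|[set g | tdom g S]| = (2 ^ n) ^ #|S| * (2 ^ n - 2 ^ (n - #|S|)) ^ (n - #|S|).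
Proof.
have -> : [set g | tdom g S] =
  phi S @^-1: [set h : Om | [forall u, (u \in S) || [exists s in S, h u s]]].
  by apply/setP => g; rewrite !inE tdom_phi.
rewrite card_preimset; last exact: (can_inj (phiK S)).
rewrite (card_ffun_forall (fun u (row : {ffun 'I_n -> bool}) => (u \in S) || [exists s in S, row s])).
rewrite (bigID (fun s => s \in S)) /=.
rewrite [X in X * _](eq_bigr (fun _ => 2 ^ n)); last first.
  move=> u uS; rewrite -card_allrows; apply: eq_card => row.
  by move: uS; rewrite !unfold_in /= => ->.
rewrite [X in _ * X](eq_bigr (fun _ => 2 ^ n - 2 ^ (n - #|S|))); last first.
  move=> u uS; rewrite -card_exrows; apply: eq_card => row.
  by rewrite !unfold_in /=; move: uS; rewrite unfold_in => /negbTE ->.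
rewrite prod_nat_const.
rewrite (eq_bigl (fun s => s \in ~: S)); last by move=> s; rewrite inE.
rewrite prod_nat_const; congr (_ * _ ^ _).
have h := cardsC S; rewrite card_ord in h.
have hS : #|S| <= n by move: (leq_addr #|~: S| #|S|); rewrite h.
by apply/eqP; rewrite -(eqn_add2l #|S|) subnKC // h.
Qed.


Lemma tdom_mono g (S T : {set 'I_n}) : S \subset T -> tdom g S -> tdom g T.
Proof.
move=> sST /forallP H; apply/forallP => u; apply/implyP => uT.
have uS : u \notin S by apply: contra uT; apply: (subsetP sST).
have /existsP [s /andP [sS b]] := implyP (H u) uS.
by apply/existsP; exists s; rewrite (subsetP sST) .
Qed.

Lemma exists_good k : k <= n ->
  'C(n, k) * ((2 ^ n) ^ k * (2 ^ n - 2 ^ (n - k)) ^ (n - k)) < (2 ^ n) ^ n ->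
  exists g : Om, forall S, tdom g S -> k < #|S|.
Proof.
move=> kn hlt.
set Bad := [set g : Om | [exists S : {set 'I_n}, (#|S| == k) && tdom g S]].
have hB : #|Bad| <= \sum_(S in [set S : {set 'I_n} | #|S| == k]) #|[set g | tdom g S]|.
  rewrite -[#|Bad|]sum1_card big_mkcond /=.
  rewrite (eq_bigr (fun S : {set 'I_n} => \sum_(g : Om) (tdom g S : nat))); last first.
    move=> S _; rewrite -sum1_card big_mkcond /=; apply: eq_bigr => g _.
    by rewrite inE; case: tdom.
  rewrite (exchange_big_dep xpredT) //=; apply: leq_sum => g _.
  case: ifP => // /[!inE] /existsP [S /andP [hS hd]].
  rewrite (bigD1 S) /=; last by rewrite inE hS.
  by rewrite hd.
have hsum : \sum_(S in [set S : {set 'I_n} | #|S| == k]) #|[set g | tdom g S]|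
    = 'C(n, k) * ((2 ^ n) ^ k * (2 ^ n - 2 ^ (n - k)) ^ (n - k)).
  rewrite (eq_bigr (fun _ => (2 ^ n) ^ k * (2 ^ n - 2 ^ (n - k)) ^ (n - k))).
    by rewrite sum_nat_const card_draws card_ord.
  by move=> S; rewrite inE => /eqP <-; rewrite card_tdom.
have cOm : #|Om| = (2 ^ n) ^ n by rewrite card_ffun card_allrows card_ord.
have : 0 < #|~: Bad|.
  have := cardsC Bad; rewrite cOm; lia.
rewrite card_gt0 => /set0Pn [g]; rewrite !inE negb_exists => /forallP gB.
exists g => S hS; rewrite ltnNge; apply/negP => Sk.
have [T /andP [sT /eqP cT]] := extend_set Sk (ltac:(by rewrite card_ord)).
have := gB T; rewrite cT eqxx /=.
by rewrite (tdom_mono sT hS).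
Qed.

End Count.

Lemma expn_le m n e : m <= n -> m ^ e <= n ^ e.
Proof. by move=> h; elim: e => // e IH; rewrite !expnS leq_mul. Qed.

Lemma bern a N : a ^ N + N * a ^ N.-1 <= (a + 1) ^ N.
Proof.
elim: N => [|N IH] //=.
rewrite expnS [(a+1)^N.+1]expnS.
have h1 : (a + 1) * (a ^ N + N * a ^ N.-1) <= (a + 1) * (a + 1) ^ N by rewrite leq_mul2l IH orbT.
apply: leq_trans h1.
case: N {IH} => [|N] /=; first by rewrite !expn0; lia.
rewrite expnS; set x := a ^ N; nia.
Qed.

Lemma key2 a : 2 * a ^ (a + 1) <= (a + 1) ^ (a + 1).
Proof.
apply: leq_trans (bern a (a + 1)).
rewrite addn1 /= expnS mul2n -addnn leq_add2l leq_mul2r leqnSn orbT //.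
Qed.

Lemma bin_le n t : 'C(n, t) <= n ^ t.
Proof.
have h : 'C(n, t) <= 'C(n, t) * t`! by rewrite leq_pmulr // fact_gt0.
apply: leq_trans h _; rewrite bin_ffact ffact_prod.
apply: leq_trans (leq_prod (E2 := fun _ => n) _) _.
  by move=> i _; rewrite leq_subr.
by rewrite prod_nat_const card_ord.
Qed.

Lemma p4 t : 1 <= t -> 5 * t * t + 5 * t + 1 <= 2 ^ (4 * t).
Proof.
elim: t => [|t IH] // _.
case: t IH => [|t] IH; first by [].
have -> : 2 ^ (4 * t.+2) = 16 * 2 ^ (4 * t.+1) by rewrite [4 * t.+2]mulnS expnD.
have := IH isT; set X := 2 ^ (4 * t.+1); nia.
Qed.

Lemma core n t : 32 ^ t <= n -> n < 32 ^ t.+1 ->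
  'C(n, t) * (2 ^ t - 1) ^ (n - t) < (2 ^ t) ^ (n - t).
Proof.
move=> h1 h2.
case: t h1 h2 => [|t] h1 h2.
  rewrite bin0 subn0 expn0 subnn; case: n h1 h2 => // n _ _.
  by rewrite exp0n // exp1n.
set T := t.+1.
set N := 2 ^ T.
have N2 : 2 <= N by rewrite -[2]/(2 ^ 1) leq_exp2l.
set a := N - 1.
have aN : a + 1 = N by rewrite /a subnK //; lia.
set j := 5 * T * T + 5 * T.
have hC : 'C(n, T) < 2 ^ j.
  apply: leq_ltn_trans (bin_le n T) _.
  have -> : 2 ^ j = (32 ^ T.+1) ^ T.
    by rewrite -expnM (_ : 32 = 2 ^ 5) // -expnM; congr (_ ^ _); rewrite /j; nia.
  by rewrite ltn_exp2r.
have hT : T < N by rewrite ltn_expl.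
have h4 := p4 (isT : 1 <= T).
have hm : j * N <= n - T.
  have e32 : 32 ^ T = 2 ^ (4 * T) * N by rewrite /N -expnD (_ : 32 = 2 ^ 5) // -expnM; congr (_ ^ _); nia.
  move: h1; rewrite e32; set Y := 2 ^ (4 * T); rewrite /j; nia.
set m := n - T.
have em : m = j * N + (m - j * N) by rewrite subnKC.
have ha : 0 < a ^ m by rewrite expn_gt0; apply/orP; left; lia.
apply: leq_trans (_ : 2 ^ j * a ^ m <= _).
  by rewrite ltn_pmul2r.
rewrite (_ : a ^ m = a ^ (N * j) * a ^ (m - j * N)); last by rewrite -expnD mulnC -em.
rewrite (_ : N ^ m = N ^ (N * j) * N ^ (m - j * N)); last by rewrite -expnD mulnC -em.
rewrite mulnA; apply: leq_mul; last by apply: expn_le; lia.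
rewrite !expnM -expnMn.
apply: expn_le.
by have := key2 a; rewrite aN.
Qed.

Section Reduce.
Variables (n r : nat) (x0 : 'I_n) (b : rel 'I_n).
Hypothesis hb : forall u v, u != v -> b u v || b v u.
Hypothesis hr : 2 <= r.

Definition lastv (E : {set 'I_n}) : 'I_n :=
  let a := head x0 (enum E) in
  if [pick y in E | b a y && (y != a)] is Some y then y else a.

Lemma lastv_spec (E : {set 'I_n}) : 2 <= #|E| ->
  lastv E \in E /\ exists2 s, s \in E & (s != lastv E) && b s (lastv E).
Proof.
move=> hE.
have aE : head x0 (enum E) \in E.
  have : 0 < #|E| by apply: leq_trans hE.
  rewrite card_gt0 => /set0Pn [y yE].
  rewrite -mem_enum; move: yE; rewrite -mem_enum.
  by case: (enum E) => [|z s] //= _; rewrite inE eqxx.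
rewrite /lastv /=; set a := head x0 (enum E).
case: pickP => [y /andP [yE /andP [bay ya]]|H].
  by split => //; exists a => //; rewrite eq_sym ya bay.
split => //.
have : 0 < #|E :\ a| by rewrite (cardsD1 a E) aE in hE.
rewrite card_gt0 => /set0Pn [y]; rewrite !inE => /andP [ya yE].
exists y => //; rewrite ya /=.
have := H y; rewrite yE ya /= andbT => /negbT nb.
by have := hb ya; rewrite (negbTE nb) orbF.
Qed.

Definition orient : orientation_of n r :=
  [ffun E => insubd (nseq_tuple r x0) (rcons (rem (lastv E) (enum E)) (lastv E))].

Lemma orient_val (E : {set 'I_n}) : #|E| = r ->
  val (orient E) = rcons (rem (lastv E) (enum E)) (lastv E).
Proof.
move=> hE; rewrite ffunE val_insubd size_rcons size_rem; last first.
  by rewrite mem_enum; case: (@lastv_spec E (ltac:(by rewrite hE))).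
by rewrite -cardE hE prednK ?(leq_trans _ hr) // eqxx.
Qed.

Lemma orient_ok : is_orientation orient.
Proof.
apply/forallP => E; apply/implyP => /eqP hE.
rewrite orient_val // perm_rcons perm_sym perm_to_rem // mem_enum.
by case: (@lastv_spec E (ltac:(by rewrite hE))).
Qed.

Lemma orient_dom S : dominating (r - 1) orient S ->
  [forall u, (u \notin S) ==> [exists s in S, b s u]].
Proof.
move=> /forallP H; apply/forallP => u; apply/implyP => uS.
have /existsP [E /and3P [/eqP hE uE hall]] := implyP (H u) uS.
have [vE [s sE /andP [sv bs]]] := @lastv_spec E (ltac:(by rewrite hE)).
move: hall; rewrite orient_val //.
have hsz : size (rem (lastv E) (enum E)) = r - 1.
  by rewrite size_rem ?mem_enum // -cardE hE subn1.
rewrite -cats1 -hsz take_size_cat // => /allP hall.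
have memrem x : x \in E -> x != lastv E -> x \in S.
  move=> xE xv; apply: hall; rewrite (mem_rem_uniq _ (enum_uniq _)) /= inE xv /=.
  by rewrite mem_enum.
have uv : u = lastv E.
  by apply/eqP; apply: contraNT uS => /(memrem _ uE).
apply/existsP; exists s; rewrite memrem //= uv //.
Qed.

End Reduce.

Lemma beats_tot n (g : {ffun 'I_n -> {ffun 'I_n -> bool}}) (u v : 'I_n) :
  u != v -> beats g u v || beats g v u.
Proof.
move=> uv; rewrite /beats uv eq_sym uv /= /xr (addbC (g v u)).
by case: (ltngtP u v) => h //; [case: (g u v (+) g v u) | case: (g u v (+) g v u) | move: uv; rewrite (ord_inj h) eqxx].
Qed.

Lemma full n t : t <= n -> 'C(n, t) * (2 ^ t - 1) ^ (n - t) < (2 ^ t) ^ (n - t) ->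
  'C(n, t) * ((2 ^ n) ^ t * (2 ^ n - 2 ^ (n - t)) ^ (n - t)) < (2 ^ n) ^ n.
Proof.
move=> tn h; set m := n - t in h *.
have hn : n = t + m by rewrite subnKC.
set A := 2 ^ t in h *; set B := 2 ^ m.
have e1 : 2 ^ n = A * B by rewrite hn expnD.
have e2 : A * B - B = (A - 1) * B by rewrite mulnBl mul1n.
have e3 : (A * B) ^ n = (A * B) ^ t * (A ^ m * B ^ m) by rewrite {1}hn expnD [(A * B) ^ m]expnMn.
rewrite e1 e2 e3 [((A - 1) * B) ^ m]expnMn.
have Xp : 0 < (A * B) ^ t by rewrite expn_gt0 muln_gt0 !expn_gt0.
have Yp : 0 < B ^ m by rewrite !expn_gt0.
set X := (A * B) ^ t in Xp *; set Y := B ^ m in Yp *.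
rewrite (_ : 'C(n, t) * (X * ((A - 1) ^ m * Y)) = (X * Y) * ('C(n, t) * (A - 1) ^ m)); last first.
  set C := 'C(n, t); set Z := (A - 1) ^ m; lia.
rewrite (_ : X * (A ^ m * Y) = (X * Y) * A ^ m); last by set W := A ^ m; lia.
by rewrite ltn_pmul2l // muln_gt0 Xp.
Qed.

Lemma Gamma_lb n r : 2 <= r -> r <= n -> (trunc_log 32 n).+1 <= Gamma n r (r - 1).
Proof.
move=> hr hrn.
set t := trunc_log 32 n.
have n0 : 0 < n by apply: leq_trans hrn; apply: leq_trans hr.
have h1 : 32 ^ t <= n by apply: trunc_logP.
have h2 : n < 32 ^ t.+1 by apply: trunc_log_ltn.
have tn : t < n by apply: leq_trans h1; apply: ltn_expl.
have [g hg] := @exists_good n t (ltnW tn) (full (ltnW tn) (core h1 h2)).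
pose x0 : 'I_n := Ordinal n0.
pose D := orient r x0 (beats g).
have hb : forall u v, u != v -> beats g u v || beats g v u by move=> u v; apply: beats_tot.
apply: leq_trans (_ : gamma (r - 1) D <= _); last first.
  by apply: (leq_bigmax_cond (P := fun D => is_orientation D) (F := fun D => gamma (r - 1) D)); apply: orient_ok.
rewrite /gamma; apply: (big_ind (fun x => t < x)).
- by rewrite card_ord.
- by move=> x y hx hy; rewrite leq_min hx hy.
- by move=> S hS; apply: hg; apply: (orient_dom hb hr hS).
Qed.

Local Open Scope R_scope.

Lemma INR_expn m k : INR (m ^ k)%N = INR m ^ k.
Proof. elim: k => [|k IH] //=; by rewrite expnS mult_INR IH. Qed.
Lemma INR_lt a b : (a < b)%N -> INR a < INR b.
Proof. by move/ltP; apply: lt_INR. Qed.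
Lemma INR_le a b : (a <= b)%N -> INR a <= INR b.
Proof. by move/leP; apply: le_INR. Qed.

Lemma final : forall r : nat, le 2 r ->
  exists c : R, 0 < c /\
    forall n : nat, le r n ->
      c * Rpower (ln (INR n)) (1 / INR (Nat.sub r 1)) <= INR (Gamma n r (Nat.sub r 1)).
Proof.
move=> r /leP hr.
have l32 : 1 < ln 32.
  rewrite -[X in X < _]ln_exp; apply: ln_increasing; first by apply: exp_pos.
  have := exp_le_3; lra.
exists (/ ln 32); split; first by apply: Rinv_0_lt_compat; lra.
move=> n /leP hrn.
have hG := INR_le (Gamma_lb hr hrn).
set t := trunc_log 32 n in hG.
have h2 : (n < 32 ^ t.+1)%N by apply: trunc_log_ltn.
have n2 : (2 <= n)%N by apply: leq_trans hrn.
have nR : 2 <= INR n by have := INR_le n2.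
have lnpos : 0 < ln (INR n).
  rewrite -ln_1; apply: ln_increasing; lra.
have hy0 : 0 < 1 / INR (Nat.sub r 1).
  apply: Rdiv_lt_0_compat; first lra.
  apply: (INR_lt (a := 0)); rewrite -subnE; by rewrite subn_gt0.
have hy1 : 1 / INR (Nat.sub r 1) <= 1.
  have : 1 <= INR (Nat.sub r 1).
    apply: (INR_le (a := 1)); rewrite -subnE; by rewrite subn_gt0.
  move=> h; apply: (Rmult_le_reg_r (INR (Nat.sub r 1))); first lra.
  rewrite /Rdiv Rmult_assoc Rinv_l; lra.
have tpos : 1 <= INR t.+1 by apply: (INR_le (a := 1)).
have cpos : 0 < / ln 32 by apply: Rinv_0_lt_compat; lra.
apply: Rle_trans hG.
case: (Rle_lt_dec 1 (ln (INR n))) => hl.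
- apply: Rle_trans (_ : / ln 32 * ln (INR n) <= _).
    apply: Rmult_le_compat_l; first lra.
    rewrite -{2}(Rpower_1 (ln (INR n))) //; apply: Rle_Rpower => //.
  have : ln (INR n) < INR t.+1 * ln 32.
    rewrite -ln_pow; last lra.
    apply: ln_increasing; first lra.
    have e32 : INR 32 = 32 by rewrite INR_IZR_INZ.
    by rewrite -e32 -INR_expn; apply: INR_lt.
  move=> h; apply: (Rmult_le_reg_l (ln 32)); first lra.
  rewrite -Rmult_assoc Rinv_r; lra.
- apply: Rle_trans (_ : / ln 32 * 1 <= _); last first.
    have : / ln 32 < 1 by rewrite -Rinv_1; apply: Rinv_lt_contravar; lra.
    lra.
  apply: Rmult_le_compat_l; first lra.
  rewrite /Rpower -[X in _ <= X]exp_0.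
  have : ln (ln (INR n)) < 0 by rewrite -ln_1; apply: ln_increasing.
  move=> h.
  have : 1 / INR (Nat.sub r 1) * ln (ln (INR n)) <= 0.
    have := Rmult_lt_compat_l _ _ _ hy0 h; lra.
  case/Rle_lt_or_eq_dec => [h'|e]; last by rewrite e; lra.
  by apply: Rlt_le; apply: exp_increasing.
Qed.

End Helpers.

Open Scope R_scope.

Theorem mainTheorem2 :
  forall r : nat, (2 <= r)%nat ->
  exists c : R, 0 < c /\
    forall n : nat, (r <= n)%nat ->
      c * Rpower (ln (INR n)) (1 / INR (r - 1)) <= INR (Gamma n r (r - 1)).
Proof. exact Helpers.final. Qed.
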